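(* Let $k\ge1$, $t\ge0$ and $n\ge k+t$ be integers, and let $F$ be a monotone $t$-admissible $k$-CNF formula on $n$ variables with $|\mathrm{sat}_t(F)|=S(n,t,k)$. Suppose no clause of $F$ is redundant, i.e. removing any single clause from $F$ yields a formula that is not $t$-admissible. Then every clause of $F$ has width exactly $k$.
   Context: A $k$-CNF formula is a conjunction of clauses (disjunctions of literals) each of width (number of literals) at most $k$; it is monotone if no literal is negated. $\mathrm{sat}_t(F)$ is the set of satisfying assignments of Hamming weight exactly $t$; $F$ is $t$-admissible if it has no satisfying assignment of Hamming weight less than $t$; $S(n,t,k)$ is the maximum of $|\mathrm{sat}_t(F)|$ over all $t$-admissible $k$-CNF formulas $F$ on $n$ variables. *)

(* Defs.v *)
From mathcomp Require Import all_boot.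
Set Implicit Arguments. Unset Strict Implicit. Unset Printing Implicit Defensive.

(* A literal is a pair (i, b): b = true is the positive
   literal x_i, b = false the negative literal ~x_i.  An assignment is identified with the set of variables set to true,
   so its Hamming weight is its cardinality. *)
Definition literal n := ('I_n * bool)%type.
Definition clause n := {set literal n}.
Definition cnf n := {set clause n}.
Definition assignment n := {set 'I_n}.

Definition sat_lit n (a : assignment n) (l : literal n) : bool :=
  (l.1 \in a) == l.2.
Definition sat_clause n (a : assignment n) (C : clause n) : bool :=
  [exists l in C, sat_lit a l].
Definition sat_cnf n (F : cnf n) (a : assignment n) : bool :=
  [forall C in F, sat_clause a C].

Definition width n (C : clause n) : nat := #|C|.

Definition is_kCNF n (k : nat) (F : cnf n) : bool :=
  [forall C in F, width C <= k].

Definition monotone n (F : cnf n) : bool :=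
  [forall C in F, forall l in C, l.2].

Definition sat_t n (t : nat) (F : cnf n) : {set assignment n} :=
  [set a : assignment n | sat_cnf F a & #|a| == t].

Definition admissible n (t : nat) (F : cnf n) : bool :=
  [forall a : assignment n, (#|a| < t) ==> ~~ sat_cnf F a].

Definition S (n t k : nat) : nat :=
  \max_(F : cnf n | is_kCNF k F && admissible t F) #|sat_t t F|.

(* Main.v *)
Require Import Defs.
From mathcomp Require Import all_boot zify.

Lemma exists_sub_card (T : finType) (A : {set T}) m :
  m <= #|A| -> exists S : {set T}, S \subset A /\ #|S| = m.
Proof.
elim: m => [|m IH] hm; first by exists set0; rewrite sub0set cards0.
have [S [SA cS]] := IH (ltnW hm).
have : 0 < #|A :\: S| by rewrite cardsDS // cS subn_gt0.
rewrite card_gt0 => /set0Pn [x]; rewrite inE => /andP [xS xA].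
exists (x |: S); split; first by rewrite subUset sub1set xA SA.
by rewrite cardsU1 xS cS.
Qed.

Theorem lemma6 (k t n : nat) (F : cnf n) :
  1 <= k -> k + t <= n ->
  monotone F -> is_kCNF k F -> admissible t F ->
  #|sat_t t F| = S n t k ->
  (forall C, C \in F -> ~~ admissible t (F :\ C)) ->
  forall C, C \in F -> width C = k.
Proof.
move=> k1 ktn mon kF adm opt irr C CF.
have wk : width C <= k by move/forallP: kF => /(_ C); rewrite CF.
apply/eqP; rewrite eqn_leq wk /=; rewrite leqNgt; apply/negP => wlt.
have monC : forall D, D \in F -> forall l, l \in D -> l.2.
  by move=> D DF l lD; move/forallP: mon => /(_ D); rewrite DF /= => /forallP /(_ l); rewrite lD.
have := irr C CF; rewrite negb_forall => /existsP [b]; rewrite negb_imply negbK => /andP [bt bsat].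
have satFC : forall a, sat_cnf (F :\ C) a -> sat_clause a C -> sat_cnf F a.
  move=> a /forallP Ha HC; apply/forallP => D; apply/implyP => DF.
  case: (D =P C) => [->|/eqP DC] //.
  by have := Ha D; rewrite !inE DC DF.
have bC : ~~ sat_clause b C.
  apply/negP => HC; move/forallP: adm => /(_ b); rewrite bt /= => /negP; apply.
  exact: satFC.
pose vC := [set l.1 | l in C].
have bvC : [disjoint b & vC].
  rewrite -setI_eq0; apply/eqP/setP => x; rewrite !inE.
  apply/negP => /andP [xb /imsetP [l lC xl]]; rewrite xl in xb.
  move/negP: bC; apply; apply/existsP; exists l; rewrite lC /sat_lit xb.
  by rewrite (monC C CF l lC).
pose U := ~: vC.
have bU : b \subset U by rewrite /U -disjoints_subset.
have cU : #|U| = n - #|vC| by rewrite cardsCs setCK card_ord.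
have cvC : #|vC| <= #|C| := leq_imset_card _ _.
have : t - #|b| <= #|U :\: b|.
  rewrite cardsDS // cU; move: wlt cvC ktn bt; rewrite /width; move: #|vC| #|C| #|b| => x y z; lia.
case/exists_sub_card => S' [S'U cS'].
pose S0 := b :|: S'.
have cS0 : #|S0| = t.
  rewrite cardsU.
  have -> : b :&: S' = set0.
    apply/setP => x; rewrite !inE; apply/negP => /andP [xb xS'].
    by move/subsetP: S'U => /(_ x xS'); rewrite !inE xb.
  by rewrite cards0 subn0 cS' subnKC // ltnW.
have S0vC : forall x, x \in S0 -> x \notin vC.
  move=> x; rewrite inE => /orP [xb|xS'].
    by move/subsetP: bU => /(_ x xb); rewrite inE.
  by move/subsetP: S'U => /(_ x xS'); rewrite !inE => /andP [].
pose F' := (F :\ C) :|: [set (x, true) |: C | x in S0].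
have newcl : forall D, D \in F' -> D \in F :\ C \/ exists2 x, x \in S0 & D = (x, true) |: C.
  move=> D; rewrite inE => /orP [DF|/imsetP [x xS ->]]; [by left|by right; exists x].
have kF' : is_kCNF k F'.
  apply/forallP => D; apply/implyP => /newcl [DF|[x _ ->]].
    by move/forallP: kF => /(_ D); move: DF; rewrite inE => /andP [_ ->].
  by rewrite /width cardsU1; apply: leq_trans (leq_add (leq_b1 _) (leqnn _)) _; rewrite add1n.
have adm' : admissible t F'.
  apply/forallP => a; apply/implyP => alt; apply/negP => /forallP Ha.
  have HFC : sat_cnf (F :\ C) a.
    by apply/forallP => D; apply/implyP => DFC; apply: (implyP (Ha D)); rewrite inE DFC.
  have aC : ~~ sat_clause a C.
    apply/negP => HC; move/forallP: adm => /(_ a); rewrite alt /= => /negP; apply.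
    exact: satFC.
  have : S0 \subset a.
    apply/subsetP => x xS.
    have := Ha ((x, true) |: C); rewrite inE (imset_f (fun x => (x, true) |: C) xS) orbT /=.
    case/existsP => l; rewrite !inE => /andP [/orP [/eqP Hl|lC] sl].
      by move: sl; rewrite Hl /sat_lit /= eqb_id.
    by move/negP: aC; case; apply/existsP; exists l; rewrite lC.
  move/subset_leq_card; rewrite cS0 => ta.
  by move: (leq_ltn_trans ta alt); rewrite ltnn.
have : #|sat_t t F'| <= S n t k.
  by rewrite /S; apply: (leq_bigmax_cond (F := fun F => #|sat_t t F|)); rewrite kF' adm'.
rewrite -opt; apply/negP; rewrite -ltnNge; apply: proper_card.
apply/properP; split.
  apply/subsetP => a; rewrite !inE => /andP [Fa ->]; rewrite andbT.
  apply/forallP => D; apply/implyP => /newcl [DF|[x _ ->]].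
    by move/forallP: Fa => /(_ D); move: DF; rewrite inE => /andP [_ ->].
  move/forallP: Fa => /(_ C); rewrite CF /= => /existsP [l /andP [lC sl]].
  by apply/existsP; exists l; rewrite inE lC orbT.
exists S0; rewrite !inE cS0 eqxx !andbT.
  apply/forallP => D; apply/implyP => /newcl [DF|[x xS ->]].
    move: DF; rewrite inE => /andP [DC DF].
    have := bsat; move/forallP => /(_ D); rewrite inE DC DF /= => /existsP [l /andP [lD sl]].
    apply/existsP; exists l; rewrite lD /=; move: sl; rewrite /sat_lit (monC D DF l lD).
    by rewrite !eqb_id inE => ->.
  by apply/existsP; exists (x, true); rewrite !inE eqxx /= /sat_lit /= xS.
apply/negP => /forallP /(_ C); rewrite CF /= => /existsP [l /andP [lC sl]].
move: sl; rewrite /sat_lit (monC C CF l lC) eqb_id => lS.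
by have := S0vC _ lS; rewrite (imset_f (fun l => l.1) lC).
Qed.
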